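(* (i) Let $H$ be a primitive permutation group on a finite set $\Delta$ that is not cyclic of prime order, and let $K\le S_n$ ($n\ge2$) be a transitive group no cyclic subgroup of which is transitive. Then $H\wr K$ in the product action on $\Delta^n$ is a primitive group every element of which is an imprimitive permutation of $\Delta^n$. (ii) Let $m\ge1$ and let $G=S_3\wr C_2^m$ in the product action, where $C_2^m$ acts regularly on $2^m$ points; so $G$ is a primitive group of degree $3^{2^m}$. Then any subgroup of $G$ generated by fewer than $m$ elements preserves a partition of the $3^{2^m}$ points into blocks of equal size $b$ with $1<b<3^{2^m}$; in particular at least $m$ elements are needed to generate a primitive subgroup of $G$.
   Context: For $H\le{\rm Sym}(\Delta)$ and $K\le S_n$, $H\wr K$ in product action acts on $\Delta^n$ by applying $h_i\in H$ to the $i$-th coordinate and permuting coordinates by $\sigma\in K$. A permutation of a set $\Omega$ of size $N$ is imprimitive if it preserves a partition of $\Omega$ into blocks of equal size $b$ with $1<b<N$. *)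

(* Defs.v *)
From HB Require Import structures.
From mathcomp Require Import all_boot all_order all_fingroup all_solvable.
Set Implicit Arguments. Unset Strict Implicit. Unset Printing Implicit Defensive.

Local Open Scope group_scope.

(* Product action of H wr K on Delta^I (I a finite index set of coordinates):
   (h, s) sends x to the point whose i-th coordinate is h_i (x (s^-1 i)),
   i.e. h_i is applied in the i-th coordinate and coordinates are permuted
   by s. *)
Definition pa_fun (D I : finType) (h : {ffun I -> {perm D}}) (s : {perm I})
  (x : {ffun I -> D}) : {ffun I -> D} := [ffun i => h i (x (s^-1 i))].

Lemma pa_fun_inj (D I : finType) (h : {ffun I -> {perm D}}) (s : {perm I}) :
  injective (pa_fun h s).
Proof.
move=> x y /ffunP E; apply/ffunP => j.
have := E (s j); rewrite !ffunE permK => /perm_inj //.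
Qed.

Definition pa_perm (D I : finType) (h : {ffun I -> {perm D}}) (s : {perm I})
  : {perm {ffun I -> D}} := perm (@pa_fun_inj D I h s).

Definition wreath_pa (D I : finType) (H : {set {perm D}}) (K : {set {perm I}})
  : {set {perm {ffun I -> D}}} :=
  [set pa_perm h s | h in [set h : {ffun I -> {perm D}} | [forall i, h i \in H]],
                     s in K].

Definition preserves_equipartition (T : finType) (A : {set {perm T}}) : Prop :=
  exists (P : {set {set T}}) (b : nat),
    [/\ partition P [set: T], {in P, forall B : {set T}, #|B| = b}, 1 < b < #|T| &
        {in A, forall g : {perm T}, {in P, forall B : {set T}, [set g x | x in B] \in P}}].

Definition imprimitive_perm (T : finType) (g : {perm T}) : Prop :=
  exists (P : {set {set T}}) (b : nat),
    [/\ partition P [set: T], {in P, forall B : {set T}, #|B| = b}, 1 < b < #|T| &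
        {in P, forall B : {set T}, [set g x | x in B] \in P}].

(* The regular action of C_2^m on 2^m points: translations of the
   elementary abelian group {ffun 'I_m -> bool} (addition = xor). *)
Definition xor_fun m (v : {ffun 'I_m -> bool}) (x : {ffun 'I_m -> bool})
  : {ffun 'I_m -> bool} := [ffun i => x i (+) v i].

Lemma xor_fun_inj m (v : {ffun 'I_m -> bool}) : injective (xor_fun v).
Proof.
move=> x y /ffunP E; apply/ffunP => i; have := E i; rewrite !ffunE.
by case: (x i); case: (y i); case: (v i).
Qed.

Definition xor_perm m (v : {ffun 'I_m -> bool}) : {perm {ffun 'I_m -> bool}} :=
  perm (@xor_fun_inj m v).

Definition C2m_regular m : {set {perm {ffun 'I_m -> bool}}} :=
  [set xor_perm v | v : {ffun 'I_m -> bool}].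

(* Main.v *)
Require Import Defs.
From HB Require Import structures.
From mathcomp Require Import all_boot all_order all_fingroup all_solvable.
From mathcomp Require Import zify.

Module WreathHelpers.
Set Implicit Arguments. Unset Strict Implicit. Unset Printing Implicit Defensive.
Local Open Scope group_scope.


Section Alg.
Variables (D I : finType).

Lemma pa_permE (h : {ffun I -> {perm D}}) s x :
  pa_perm h s x = [ffun i => h i (x (s^-1 i))].
Proof. by rewrite permE. Qed.

Lemma pa_permM h s h' s' :
  pa_perm h s * pa_perm h' s' =
  pa_perm [ffun i => h (s'^-1 i) * h' i] (s * s') :> {perm {ffun I -> D}}.
Proof.
apply/permP => x; rewrite permM !pa_permE; apply/ffunP => i.
by rewrite !ffunE permM invMg permM.
Qed.

Definition tau (s : {perm I}) : {perm {ffun I -> D}} := pa_perm [ffun _ => 1] s.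
Definition delta (h : {ffun I -> {perm D}}) := pa_perm h 1.
Definition single j (c : {perm D}) : {ffun I -> {perm D}} :=
  [ffun i => if i == j then c else 1].

Lemma pa_tau_delta h s : pa_perm h s = tau s * delta h.
Proof.
rewrite pa_permM mulg1; congr pa_perm; apply/ffunP => i; by rewrite !ffunE mul1g.
Qed.

Lemma deltaM h h' : delta h * delta h' = delta [ffun i => h i * h' i].
Proof. rewrite /delta pa_permM mulg1 invg1; congr pa_perm; apply/ffunP=> i; by rewrite !ffunE perm1. Qed.

Lemma delta1 : delta [ffun _ : I => 1 : {perm D}] = 1.
Proof. apply/permP => x; rewrite pa_permE perm1. apply/ffunP => i.
by rewrite !ffunE invg1 !perm1. Qed.

Lemma deltaV h : (delta h)^-1 = delta [ffun i => (h i)^-1].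
Proof.
apply/eqP; rewrite eq_invg_mul deltaM -delta1; apply/eqP; congr delta.
by apply/ffunP => i; rewrite !ffunE mulgV.
Qed.

Lemma conj_tau s g : tau s^-1 * delta g * tau s = delta [ffun i => g (s^-1 i)].
Proof.
rewrite /tau /delta !pa_permM mulg1 mulVg; congr pa_perm.
by apply/ffunP => i; rewrite !ffunE mulg1 mul1g.
Qed.

Lemma singleM j c c' : [ffun i => single j c i * single j c' i] = single j (c * c').
Proof. apply/ffunP => i; rewrite !ffunE; case: (i == j) => //; exact: mulg1. Qed.

Lemma single1 j : single j 1 = [ffun _ => 1].
Proof. by apply/ffunP => i; rewrite !ffunE; case: (i == j). Qed.

Lemma tau_fix s (x : {ffun I -> D}) a : x = [ffun _ => a] -> tau s x = x.
Proof. by move=> ->; rewrite pa_permE; apply/ffunP => i; rewrite !ffunE perm1. Qed.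

End Alg.

Section WG.
Variables (D I : finType) (H : {group {perm D}}) (K : {group {perm I}}).

Lemma wreathP (g : {perm {ffun I -> D}}) : reflect (exists h : {ffun I -> {perm D}}, exists2 s, s \in K &
     [/\ forall i, h i \in H & g = pa_perm h s]) (g \in wreath_pa H K).
Proof.
apply: (iffP imset2P).
  move=> [h s]; rewrite inE => /forallP hH sK ->; by exists h, s.
move=> [h [s sK [hH ->]]]; exists h s => //; rewrite inE; exact/forallP.
Qed.

Lemma pa_mem (h : {ffun I -> {perm D}}) s : (forall i, h i \in H) -> s \in K -> pa_perm h s \in wreath_pa H K.
Proof. by move=> hH sK; apply/wreathP; exists h, s. Qed.

Lemma wreath_group_set : group_set (wreath_pa H K).
Proof.
apply/andP; split.
  have -> : (1 : {perm {ffun I -> D}}) = pa_perm [ffun _ => 1] 1.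
    by rewrite -[pa_perm _ _]/(delta _) delta1.
  by apply: pa_mem => // i; rewrite ffunE group1.
apply/subsetP => _ /mulsgP[g g' /wreathP[h [s sK [hH ->]]] /wreathP[h' [s' sK' [hH' ->]]] ->].
rewrite pa_permM; apply: pa_mem; last exact: groupM.
by move=> i; rewrite ffunE groupM.
Qed.

Lemma tau_mem s : s \in K -> tau D s \in wreath_pa H K.
Proof. by move=> sK; apply: pa_mem => // i; rewrite ffunE group1. Qed.

Lemma delta_mem (h : {ffun I -> {perm D}}) : (forall i, h i \in H) -> delta h \in wreath_pa H K.
Proof. by move=> hH; apply: pa_mem. Qed.

End WG.

Lemma nonreg_key (D : finType) (H : {group {perm D}}) (a : D) (h : {perm D}) :
  [primitive H, on [set: D] | 'P] -> ~~ (cyclic H && prime #|H|) ->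
  h \in H -> h a != a ->
  exists2 c, c \in 'C_H[a | 'P] & h^-1 * c^-1 * h * c \notin 'C_H[a | 'P].
Proof.
move=> prim nreg hH ha.
set Ha := 'C_H[a | 'P].
case: (boolP [exists c in Ha, h^-1 * c^-1 * h * c \notin Ha]) => [/exists_inP [c ? ?]|];
  first by exists c.
rewrite negb_exists_in => /forall_inP allin.
have trH : [transitive H, on [set: D] | 'P] by case/andP: prim.
have := prim; rewrite (trans_prim_astab (in_setT a) trH) => /maximal_eqP [_ maxH].
have conjin c : c \in Ha -> h^-1 * c * h \in Ha.
  move=> cHa; have := allin _ (groupVr cHa); rewrite negbK invgK.
  by rewrite (groupMr _ (groupVr cHa)).
have hN : h \in 'N(Ha).
  apply/normP/eqP; rewrite eqEcard cardJg leqnn andbT.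
  apply/subsetP => y; rewrite mem_conjg => /conjin.
  by rewrite conjgE invgK mulKg mulgKV.
have NH : 'N_H(Ha) = H.
  case: (maxH ('N_H(Ha))%G) => /=.
  - by rewrite subsetI subsetIl normG.
  - exact: subsetIl.
  - move=> E; have : h \in 'N_H(Ha) by rewrite inE hH hN.
    by rewrite E inE => /andP [_ /astab1P]; move/eqP: ha.
  - by [].
have Ha1 : Ha = 1.
  apply/trivgP/subsetP => c cHa; rewrite inE; apply/eqP/permP => y.
  have [g gH ->] := atransP2 trH (in_setT a) (in_setT y).
  have gN : g^-1 \in 'N(Ha).
    by have := subsetIr H 'N(Ha); rewrite NH => /subsetP; apply; rewrite groupV.
  have : c ^ g^-1 \in Ha by rewrite -(normP gN) memJ_conjg.
  rewrite /Ha inE => /andP [_ /astab1P]; rewrite /= /aperm conjgE invgK !permM => /(congr1 g).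
  by rewrite permKV perm1 => ->.
have H1 : forall L : {group {perm D}}, L \subset H -> L :=: 1 \/ L :=: H.
  move=> L sLH; have : 'C_H[a | 'P] \subset L by rewrite -/Ha Ha1 sub1G.
  by move/(maxH L)/(_ sLH) => [->|->]; [left; exact: Ha1 | right].
have ntH : 1 < #|H|.
  rewrite cardG_gt1; apply/negP => /eqP H1'.
  by move: hH; rewrite H1' inE => /eqP h1; move: ha; rewrite h1 perm1 eqxx.
have [x xH ox] := Cauchy (pdiv_prime ntH) (pdiv_dvd #|H|).
have sxH : <[x]> \subset H by rewrite cycle_subG.
case: (H1 [group of <[x]>] sxH) => /= E.
  by move: (pdiv_prime ntH); rewrite -ox /order E cards1.
have cH : cyclic H by apply/cyclicP; exists x.
have pH : prime #|H| by rewrite -E -/(order x) ox pdiv_prime.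
by move: nreg; rewrite cH pH.
Qed.

Lemma wreath_primitive (D I : finType) (H : {group {perm D}}) (K : {group {perm I}}) :
  1 < #|D| -> [primitive H, on [set: D] | 'P] -> ~~ (cyclic H && prime #|H|) ->
  [transitive K, on [set: I] | 'P] ->
  [primitive wreath_pa H K, on [set: {ffun I -> D}] | 'P].
Proof.
move=> D1 prim nreg trK.
have trH : [transitive H, on [set: D] | 'P] by case/andP: prim.
have /card_gt0P [a _] : 0 < #|D| by apply: ltnW.
pose G := Group (wreath_group_set H K).
pose al := [ffun _ : I => a].
have trG : [transitive G, on [set: {ffun I -> D}] | 'P].
  apply/imsetP; exists al; first by [].
  apply/setP => y; rewrite in_setT; symmetry.
  pose hy := [ffun i => odflt 1 [pick g in H | g a == y i]].
  have hyP i : hy i \in H /\ hy i a = y i.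
    rewrite /hy ffunE; case: pickP => [g /andP [gH /eqP e] | none] //=.
    have [g gH e] := atransP2 trH (in_setT a) (in_setT (y i)).
    by move: (none g); rewrite gH /= e eqxx.
  apply/imsetP; exists (delta hy); first by apply: delta_mem => i; case: (hyP i).
  by apply/ffunP => i; rewrite /= /aperm pa_permE !ffunE; have := proj2 (hyP i); rewrite /hy ffunE => ->.
change [primitive G, on [set: {ffun I -> D}] | 'P].
rewrite (trans_prim_astab (in_setT al) trG).
have := prim; rewrite (trans_prim_astab (in_setT a) trH) => /maximal_eqP [_ maxH].
apply/maximal_eqP; split; first exact: subsetIl.
move=> M sCM sMG.
have inC g : g \in G -> g al = al -> g \in 'C_G[al | 'P].
  by move=> gG e; rewrite inE gG; apply/astab1P.
case: (boolP (M \subset 'C_G[al | 'P])) => [sMC | /subsetPn [g gM gnC]].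
  by left; apply/eqP; rewrite eqEsubset sMC sCM.
right; apply/eqP; rewrite eqEsubset sMG /=.
have := subsetP sMG g gM => /wreathP [h [s sK [hH eg]]].
have tC t : t \in K -> tau D t \in 'C_G[al | 'P].
  by move=> tK; apply: inC; [exact: tau_mem | exact: tau_fix].
have tM t : t \in K -> tau D t \in M by move=> tK; apply: (subsetP sCM); apply: tC.
have dM : delta h \in M.
  have -> : delta h = (tau D s)^-1 * g by rewrite eg pa_tau_delta mulKg.
  by rewrite groupM ?groupV ?tM.
have [j hj] : exists j, h j a != a.
  apply/existsP; apply: contraR gnC => /existsPn allf; rewrite eg pa_tau_delta.
  apply: groupM; first exact: tC.
  apply: inC; first exact: delta_mem.
  apply/ffunP => i; rewrite pa_permE !ffunE.
  by have := allf i; rewrite negbK => /eqP.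
have [c cHa notin] := nonreg_key prim nreg (hH j) hj.
pose L := [set x in H | delta (single j x) \in M].
have gsL : group_set L.
  apply/group_setP; split; first by rewrite inE group1 single1 delta1 group1.
  move=> x y; rewrite !inE => /andP [xH xM] /andP [yH yM].
  by rewrite groupM //= -singleM -deltaM groupM.
have sCL : 'C_H[a | 'P] \subset (Group gsL).
  apply/subsetP => x xC; have := xC; rewrite inE => /andP [xH /astab1P xa].
  rewrite inE xH /=; apply: (subsetP sCM); apply: inC.
    by apply: delta_mem => i; rewrite ffunE; case: (i == j).
  apply/ffunP => i; rewrite pa_permE !ffunE.
  by case: (i == j); rewrite ?perm1.
have sLH : (Group gsL) \subset H by apply/subsetP => x; rewrite inE => /andP [].
have allj x : x \in H -> delta (single j x) \in M.
  case: (maxH _ sCL sLH) => /= E.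
    exfalso; move/negP: notin; apply; rewrite -E inE.
    have cH : c \in H by move: cHa; rewrite inE => /andP [].
    rewrite !groupM ?groupV ?hH //=.
    have -> : delta (single j ((h j)^-1 * c^-1 * h j * c)) =
              (delta h)^-1 * (delta (single j c))^-1 * delta h * delta (single j c).
      rewrite !deltaV !deltaM; congr delta; apply/ffunP => i; rewrite !ffunE.
      by case: eqP => [->|_] //; rewrite invg1 !mulg1 mulVg.
    have cM : delta (single j c) \in M.
      by move: (subsetP sCL c cHa); rewrite inE => /andP [].
    by rewrite !groupM ?groupV.
  by move=> xH; move: xH; rewrite -E inE => /andP [].
have alli i x : x \in H -> delta (single i x) \in M.
  move=> xH; have [t tK ->] := atransP2 trK (in_setT j) (in_setT i).
  have -> : delta (single ('P%act j t) x) = tau D t^-1 * delta (single j x) * tau D t.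
    rewrite conj_tau; congr delta; apply/ffunP => i'; rewrite !ffunE /= /aperm.
    case: (eqVneq i' (t j)) => [->|ne]; first by rewrite permK eqxx.
    by case: eqP => // e; move: ne; rewrite -e permKV eqxx.
  by rewrite !groupM ?tM ?groupV ?allj.
have alld (h' : {ffun I -> {perm D}}) : (forall i, h' i \in H) -> delta h' \in M.
  move=> h'H.
  have ind (r : seq I) : delta [ffun i => if i \in r then h' i else 1] \in M.
    elim: r => [|x r IH].
      have -> : [ffun i => if i \in [::] then h' i else 1] = [ffun _ => 1] by apply/ffunP => i; rewrite !ffunE.
      by rewrite delta1 group1.
    case xr: (x \in r).
      have -> : [ffun i => if i \in x :: r then h' i else 1] = [ffun i => if i \in r then h' i else 1] => //.
      by apply/ffunP => i; rewrite !ffunE in_cons; case: eqP => // ->; rewrite xr.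
    have -> : [ffun i => if i \in x :: r then h' i else 1] =
      [ffun i => [ffun i => if i \in r then h' i else 1] i * single x (h' x) i].
      apply/ffunP => i; rewrite !ffunE in_cons.
      case: (eqVneq i x) => [->|ne]; first by rewrite /= xr mul1g. 
      by rewrite /= mulg1.
    by rewrite -deltaM groupM ?alli.
  have := ind (enum I).
  have -> // : [ffun i => if i \in enum I then h' i else 1] = h'.
  by apply/ffunP => i; rewrite ffunE mem_enum.
apply/subsetP => g' /wreathP [h' [s' s'K [h'H ->]]].
by rewrite pa_tau_delta groupM ?tM ?alld.
Qed.

Lemma blocks (D I : finType) (J : {set I}) : 1 < #|D| -> J != set0 -> J != setT ->
  exists (P : {set {set {ffun I -> D}}}) (b : nat),
  [/\ partition P [set: {ffun I -> D}], {in P, forall B : {set _}, #|B| = b},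
      1 < b < #|{ffun I -> D}| &
   forall (h : {ffun I -> {perm D}}) (s : {perm I}), (forall i, i \in J -> s^-1 i \in J) ->
      {in P, forall B : {set _}, [set pa_perm h s x | x in B] \in P}].
Proof.
move=> D1 J0 JT.
pose agree (x y : {ffun I -> D}) := [forall j in J, x j == y j].
pose bl x := [set y in [set: {ffun I -> D}] | agree x y].
pose P := equivalence_partition agree [set: {ffun I -> D}].
have blc x y : #|bl x| <= #|bl y|.
  pose f (z : {ffun I -> D}) := [ffun i => if i \in J then y i else z i].
  rewrite -(@card_in_imset _ _ f (bl x)).
    apply: subset_leq_card; apply/subsetP => _ /imsetP [z zB ->].
    by rewrite inE in_setT /=; apply/forall_inP => j jJ; rewrite ffunE jJ.
  move=> z z' zB z'B /ffunP e; apply/ffunP => i; have := e i; rewrite !ffunE.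
  case: ifP => // iJ _.
  move: zB z'B; rewrite !inE /= => /forall_inP /(_ i iJ) /eqP <- /forall_inP /(_ i iJ) /eqP <-.
  by [].
have /card_gt0P [d0 _] : 0 < #|D| by apply: ltnW.
pose x0 := [ffun _ : I => d0].
exists P, #|bl x0|.
have [d1 nd] : exists d1, d1 != d0.
  have /card_gt1P [x [y [_ _ ne]]] := D1.
  by case: (eqVneq x d0) => [e|]; [exists y; rewrite -e eq_sym | exists x].
have [i1 i1J] : exists i1, i1 \notin J.
  apply/existsP; apply: contraR JT => /existsPn h; apply/eqP/setP => i.
  by rewrite in_setT; exact: (negbNE (h i)).
have /set0Pn [j1 j1J] := J0.
pose upd i := [ffun k : I => if k == i then d1 else d0].
split.
- apply: equivalence_partitionP => x y z _ _ _; split.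
    by apply/forall_inP => j _.
  move=> /forall_inP axy; apply/forall_inP/forall_inP => H j jJ.
    by rewrite -(eqP (axy j jJ)); apply: H.
  by rewrite (eqP (axy j jJ)); apply: H.
- move=> B /imsetP [x _ ->]; apply/eqP; rewrite eqn_leq.
  by rewrite (blc x x0) (blc x0 x).
- apply/andP; split.
    apply/card_gt1P; exists x0, (upd i1); split.
    + by rewrite inE in_setT /=; apply/forall_inP => j _.
    + rewrite inE in_setT /=; apply/forall_inP => j jJ; rewrite !ffunE.
      case: (eqVneq j i1) => [e|//]; by move: i1J; rewrite -e jJ.
    + apply/eqP => /ffunP /(_ i1); rewrite !ffunE eqxx => e.
      by move: nd; rewrite e eqxx.
  rewrite -cardsT; apply: proper_card; rewrite properT; apply/eqP => E.
  have : upd j1 \in bl x0 by rewrite E in_setT.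
  rewrite inE in_setT /= => /forall_inP /(_ j1 j1J); rewrite !ffunE eqxx eq_sym.
  by rewrite (negbTE nd).
move=> h s sJ B /imsetP [x _ ->].
set g := pa_perm h s.
have sub : [set g z | z in bl x] \subset bl (g x).
  apply/subsetP => _ /imsetP [z zB ->]; rewrite inE in_setT /=.
  apply/forall_inP => i iJ; rewrite !pa_permE !ffunE.
  by move: zB; rewrite inE in_setT /= => /forall_inP /(_ _ (sJ i iJ)) /eqP ->.
have -> : [set g z | z in bl x] = bl (g x).
  apply/eqP; rewrite eqEcard sub /= card_imset ?blc //; exact: perm_inj.
by apply/imsetP; exists (g x).
Qed.

Lemma gen_preserve (T : finType) (P : {set {set T}}) (X : {set {perm T}}) :
  {in X, forall g : {perm T}, {in P, forall B : {set T}, [set g x | x in B] \in P}} ->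
  {in <<X>>, forall g : {perm T}, {in P, forall B : {set T}, [set g x | x in B] \in P}}.
Proof.
move=> HX.
pose S := [set g : {perm T} | [forall B in P, [set g x | x in B] \in P]].
have gsS : group_set S.
  apply/group_setP; split.
    rewrite inE; apply/forall_inP => B BP.
    by rewrite (eq_imset _ (fun x => perm1 x)) imset_id.
  move=> g g'; rewrite !inE => /forall_inP Hg /forall_inP Hg'.
  apply/forall_inP => B BP.
  have -> : [set (g * g') x | x in B] = [set g' y | y in [set g x | x in B]].
    by rewrite -imset_comp; apply: eq_imset => x; rewrite permM.
  by apply: Hg'; apply: Hg.
have sXS : <<X>> \subset Group gsS.
  rewrite gen_subG; apply/subsetP => g gX; rewrite inE; apply/forall_inP => B BP.
  exact: HX.
by move=> g /(subsetP sXS); rewrite inE => /forall_inP.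
Qed.

Lemma equi_not_prim (T : finType) (A : {group {perm T}}) :
  preserves_equipartition A -> ~~ [primitive A, on [set: T] | 'P].
Proof.
case=> P [b [partP sz /andP [b1 bT] pres]].
rewrite /primitive negb_and; apply/orP; right; rewrite negbK; apply/existsP.
exists P; apply/and3P; split => //.
  apply/subsetP => g gA; apply/astabsP => B.
  rewrite /= /setact; apply/idP/idP => [gB|BP]; last first.
    by have := pres g gA B BP; congr (_ \in P).
  have := pres g^-1 (groupVr gA) _ gB.
  congr (_ \in P); rewrite -imset_comp.
  by rewrite (eq_imset _ (fun x => permK g x)) imset_id.
have := card_uniform_partition sz partP => cT.
rewrite ?cardsT in cT bT |- *.
apply/andP; move: cT b1 bT; set N := #|P|; set M := #|T|; move=> cT b1 bT.
split; nia.
Qed.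

Lemma gen_card_inv (gT : finGroupType) (A : {group gT}) (S : {set gT}) :
  abelian A -> S \subset A -> (forall x, x \in S -> x * x = 1) ->
  #|<<S>>| <= 2 ^ #|S|.
Proof.
move=> aA; move Hn: #|S| => n; elim: n S Hn => [|n IH] S cS sSA inv.
  by move/eqP: cS; rewrite cards_eq0 => /eqP ->; rewrite gen0 cards1.
have /card_gt0P [x xS] : 0 < #|S| by rewrite cS.
have cS' : #|S :\ x| = n by move: cS; rewrite (cardsD1 x S) xS add1n => [[]].
have sS'A : S :\ x \subset A by apply: subset_trans sSA; apply: subsetDl.
have IHS := IH _ cS' sS'A (fun y yS => inv y (subsetP (subsetDl S [set x]) y yS)).
rewrite -(setD1K xS).
have xinA : x \in A by apply: (subsetP sSA).
change (#|[set x] <*> (S :\ x)| <= 2 ^ n.+1)%N.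
rewrite -joing_idl -joing_idr -/(cycle x).
rewrite cent_joinEl; last first.
  apply: subset_trans (sub_abelian_cent aA _); first by rewrite cycle_subG.
  by rewrite gen_subG.
have ox : #|<[x]>| <= 2.
  apply: dvdn_leq => //; rewrite -/(order x) order_dvdn expgS expg1 inv //.
have := mul_cardG <[x]> <<S :\ x>>.
move: (cardG_gt0 (<[x]> :&: <<S :\ x>>)) => c0 e.
apply: leq_trans (_ : #|<[x]>| * #|<<S :\ x>>| <= 2 ^ n.+1).
  by rewrite e; apply: leq_pmulr.
by rewrite expnS leq_mul.
Qed.

Lemma xor_permM m (v w : {ffun 'I_m -> bool}) :
  xor_perm v * xor_perm w = xor_perm [ffun i => v i (+) w i].
Proof.
by apply/permP => x; rewrite permM !permE /xor_fun; apply/ffunP => i; rewrite !ffunE addbA.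
Qed.

Lemma xor_perm0 m : xor_perm [ffun _ : 'I_m => false] = 1.
Proof. by apply/permP => x; rewrite perm1 permE /xor_fun; apply/ffunP => i; rewrite !ffunE addbF. Qed.

Lemma C2m_gs m : group_set (C2m_regular m).
Proof.
apply/group_setP; split.
  by rewrite -xor_perm0; apply: imset_f.
move=> _ _ /imsetP [v _ ->] /imsetP [w _ ->]; rewrite xor_permM; exact: imset_f.
Qed.

Lemma C2m_abelian m : abelian (C2m_regular m).
Proof.
apply/centsP => _ /imsetP [v _ ->] _ /imsetP [w _ ->].
rewrite /commute !xor_permM; congr xor_perm; apply/ffunP => i; rewrite !ffunE addbC //.
Qed.

Lemma C2m_inv m x : x \in C2m_regular m -> x * x = 1.
Proof.
move=> /imsetP [v _ ->]; rewrite xor_permM -(xor_perm0 m); congr xor_perm.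
by apply/ffunP => i; rewrite !ffunE addbb.
Qed.

Lemma C2m_trans m : [transitive Group (C2m_gs m), on [set: {ffun 'I_m -> bool}] | 'P].
Proof.
apply/imsetP; exists [ffun _ => false] => //; apply/setP => y; rewrite in_setT; symmetry.
apply/imsetP; exists (xor_perm y); first exact: imset_f.
by rewrite /= /aperm permE /xor_fun; apply/ffunP => i; rewrite !ffunE.
Qed.

Lemma S3_trans : [transitive [set: {perm 'I_3}], on [set: 'I_3] | 'P].
Proof.
apply/imsetP; exists ord0 => //; apply/setP => y; rewrite in_setT; symmetry.
by apply/imsetP; exists (tperm ord0 y) => //; rewrite /= /aperm tpermL.
Qed.

Lemma S3_prim : [primitive [set: {perm 'I_3}], on [set: 'I_3] | 'P].
Proof.
rewrite (trans_prim_astab (in_setT ord0) S3_trans) /maximal_eq.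
rewrite (p_index_maximal (subsetIl _ _)) ?orbT //.
by rewrite -card_orbit (atransP S3_trans) ?cardsT ?card_ord.
Qed.

Lemma S3_nreg : ~~ (cyclic [set: {perm 'I_3}] && prime #|[set: {perm 'I_3}]|).
Proof. by rewrite cardsT card_Sn andbF. Qed.

Lemma part4 m (X : {set {perm {ffun {ffun 'I_m -> bool} -> 'I_3}}}) :
  X \subset wreath_pa [set: {perm 'I_3}] (C2m_regular m) -> (#|X| < m)%N ->
  preserves_equipartition <<X>>.
Proof.
move=> sXG cX.
pose sel (g : {perm {ffun {ffun 'I_m -> bool} -> 'I_3}}) :=
  odflt 1 [pick s | (s \in C2m_regular m) && [exists h, g == pa_perm h s]].
have selP g : g \in X -> sel g \in C2m_regular m /\ exists h, g = pa_perm h (sel g).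
  move=> gX; have := subsetP sXG g gX.
  move=> /(@wreathP _ _ [set: {perm 'I_3}]%G (Group (C2m_gs m))) [h [s sK [hH e]]].
  rewrite /sel; case: pickP => [s' /andP [s'C /existsP [h' /eqP e']] | none] /=.
    by split; [done | exists h'].
  exfalso; have := none s; rewrite sK /=; move/negbT/negP; apply; apply/existsP.
  by exists h; rewrite e.
pose S := [set sel g | g in X].
have sSC : S \subset C2m_regular m.
  by apply/subsetP => _ /imsetP [g gX ->]; case: (selP g gX).
have cS : (#|S| <= #|X|)%N by apply: leq_imset_card.
pose L := <<S>>.
have cL : (#|L| <= 2 ^ #|S|)%N.
  apply: (@gen_card_inv _ (Group (C2m_gs m))) => //; first exact: C2m_abelian.
  by move=> x xS; apply: C2m_inv; apply: (subsetP sSC).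
pose x0 := [ffun _ : 'I_m => false].
pose J := orbit 'P L x0.
have cJ : (#|J| < #|{ffun 'I_m -> bool}|)%N.
  rewrite card_ffun card_bool card_ord.
  apply: leq_ltn_trans (leq_imset_card _ _) _.
  apply: leq_ltn_trans cL _; rewrite ltn_exp2l //.
  by apply: leq_ltn_trans cS cX.
have J0 : J != set0 by apply/set0Pn; exists x0; apply: orbit_refl.
have JT : J != setT by apply/eqP => E; move: cJ; rewrite E cardsT ltnn.
have D1 : (1 < #|'I_3|)%N by rewrite card_ord.
have [P [b [pP sz bb pres]]] := @blocks 'I_3 _ J D1 J0 JT.
exists P, b; split => //.
apply: gen_preserve => g gX; have [sC [h ->]] := selP g gX.
apply: pres => i iJ.
have selL : sel g \in L by apply: mem_gen; apply: imset_f.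
apply: orbit_trans _ iJ.
exact: (mem_orbit 'P i (groupVr selL)).
Qed.
End WreathHelpers.
Import WreathHelpers.


Theorem mainTheorem17 :
  (* (i) *)
  (forall (D : finType) (H : {group {perm D}}) (n : nat) (K : {group 'S_n}),
     1 < #|D| ->
     [primitive H, on [set: D] | 'P] ->
     ~~ (cyclic H && prime #|H|) ->
     2 <= n ->
     [transitive K, on [set: 'I_n] | 'P] ->
     (forall C : {group 'S_n}, C \subset K -> cyclic C ->
        ~~ [transitive C, on [set: 'I_n] | 'P]) ->
     [/\ group_set (wreath_pa H K),
         [primitive wreath_pa H K, on [set: {ffun 'I_n -> D}] | 'P] &
         {in wreath_pa H K, forall g, imprimitive_perm g}])
  /\
  (* (ii) *)
  (forall m : nat, 1 <= m ->
     let G := wreath_pa [set: {perm 'I_3}] (C2m_regular m) in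
     [/\ #|{ffun {ffun 'I_m -> bool} -> 'I_3}| = 3 ^ (2 ^ m),
         group_set G,
         [primitive G, on [set: {ffun {ffun 'I_m -> bool} -> 'I_3}] | 'P],
         (forall X : {set {perm {ffun {ffun 'I_m -> bool} -> 'I_3}}},
            X \subset G -> #|X| < m -> preserves_equipartition <<X>>%g) &
         (forall X : {set {perm {ffun {ffun 'I_m -> bool} -> 'I_3}}},
            X \subset G ->
            [primitive <<X>>%g, on [set: {ffun {ffun 'I_m -> bool} -> 'I_3}] | 'P] ->
            m <= #|X|)]).
Proof.
split.
  move=> D H n K D1 prim nreg n2 trK nocyc; split.
  - exact: wreath_group_set.
  - exact: wreath_primitive.
  move=> g /wreathP [h [s sK [hH ->]]].
  pose i0 : 'I_n := Ordinal (ltnW n2).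
  pose J := orbit 'P <[s]>%g i0.
  have sK' : (<[s]> \subset K)%g by rewrite cycle_subG.
  have ntr := nocyc [group of <[s]>%g] sK' (cycle_cyclic s).
  have J0 : J != set0 by apply/set0Pn; exists i0; apply: orbit_refl.
  have JT : J != setT.
    apply/negP => /eqP E; move/negP: ntr; apply; apply/imsetP; exists i0; first by [].
    by rewrite -E.
  have [P [b [pP sz bb pres]]] := blocks D1 J0 JT.
  exists P, b; split => //; apply: pres => i iJ.
  apply: orbit_trans _ iJ.
  exact: (mem_orbit 'P i (groupVr (cycle_id s))).
move=> m m1 G; split.
- by rewrite card_ffun card_ord card_ffun card_bool card_ord.
- exact: (wreath_group_set [set: {perm 'I_3}]%G (Group (C2m_gs m))).
- apply: (wreath_primitive (K := Group (C2m_gs m))).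
  + by rewrite card_ord.
  + exact: S3_prim.
  + exact: S3_nreg.
  + exact: C2m_trans.
- exact: part4.
move=> X sXG pr; rewrite leqNgt; apply/negP => cX.
by move: pr; apply/negP; apply: (equi_not_prim (A := <<X>>%G)); apply: part4.
Qed.
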